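(* Let $n\ge1$. The Chabauty space $\mathcal{C}(\mathbf{Z}\times\mathbf{Z}/n\mathbf{Z})$ is homeomorphic to $\overline{\mathbf{N}}\times[d(n)]$, the accumulation points corresponding to the subgroups $\{0\}\times\langle m\rangle$, with $m$ a positive divisor of $n$.
   Context: For a discrete group $G$, $\mathcal{C}(G)$ is the set of subgroups of $G$ with the Chabauty topology (the topology induced by the product topology on $\{0,1\}^G$). $\overline{\mathbf{N}}=\mathbf{N}\cup\{\infty\}$ is the one-point compactification of $\mathbf{N}$, $[k]=\{1,\dots,k\}$ (discrete), $d(n)$ is the number of positive divisors of $n$, and $\langle m\rangle$ is the subgroup of $\mathbf{Z}/n\mathbf{Z}$ generated by the class of $m$. *)

(* Defs.v *)
From HB Require Import structures.
From mathcomp Require Import all_boot all_order all_algebra.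
From mathcomp Require Import all_classical all_reals all_analysis.
Unset Printing Implicit Defensive.
Import Order.TTheory GRing.Theory Num.Theory.
Local Open Scope classical_set_scope.
Local Open Scope ring_scope.

(* Z/nZ for n >= 1: 'I_n.-1.+1 is 'I_n (when n >= 1), with its canonical
   zmodType structure (addition mod n) from zmodp. *)
Definition Zmod (n : nat) : finZmodType := 'I_n.-1.+1.

Definition ZxZn (n : nat) : zmodType := (int * Zmod n)%type.

Definition is_subgroup (G : zmodType) (H : G -> bool) : Prop :=
  H 0 /\ (forall x y, H x -> H y -> H (x - y)).

(* The Chabauty space C(G): the set of subgroups of G inside {0,1}^G with the
   product topology (topology of pointwise convergence). *)
Definition Chabauty (G : zmodType) : set {ptws G -> bool} :=
  [set H | @is_subgroup G H].

Definition homeomorphic_to {T U : topologicalType} (A : set T) : Prop :=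
  exists (f : T -> U) (g : U -> T),
    [/\ {within A, continuous f}, continuous g,
        (forall x, A x -> g (f x) = x) &
        (forall y, A (g y) /\ f (g y) = y)].

(* \bar N = N u {oo}, the one-point compactification of the discrete N
   (None plays the role of oo). *)
Definition Nbar : topologicalType := one_point_compactification nat.

(* [k] = {1,...,k} with the discrete topology (indexed here as 'I_k). *)
Definition Kset (k : nat) : topologicalType := discrete_topology 'I_k.

Definition ndiv (n : nat) : nat := size (divisors n).

Definition cyc_gen (n m : nat) (b : Zmod n) : bool :=
  `[< exists k : nat, b = (@inZp n.-1 m : Zmod n) *+ k >].

Definition zero_times_cyc (n m : nat) : {ptws ZxZn n -> bool} :=
  fun x => (x.1 == 0) && @cyc_gen n m x.2.

(* Main.v *)
Require Import Defs.
From HB Require Import structures.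
From mathcomp Require Import all_boot all_order all_algebra.
From mathcomp Require Import all_classical all_reals all_analysis.
From mathcomp Require Import zify.
Set Implicit Arguments. Unset Strict Implicit.
Import Order.TTheory GRing.Theory Num.Theory.
Local Open Scope classical_set_scope.
Local Open Scope ring_scope.

Definition cgr (d u v : int) := (d %| u - v)%Z.

Lemma cgr_refl d u : cgr d u u.
Proof. by rewrite /cgr subrr dvdz0. Qed.

Lemma cgr_sym d u v : cgr d u v -> cgr d v u.
Proof. by rewrite /cgr -opprB rpredN. Qed.

Lemma cgr_trans d u v w : cgr d u v -> cgr d v w -> cgr d u w.
Proof.
rewrite /cgr => h1 h2; rewrite (_ : u - w = (u - v) + (v - w)); last by lia.
exact: rpredD.
Qed.

Lemma cgr_add d u v u' v' : cgr d u v -> cgr d u' v' -> cgr d (u + u') (v + v').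
Proof.
rewrite /cgr => h1 h2; rewrite (_ : _ - _ = (u - v) + (u' - v')); last by lia.
exact: rpredD.
Qed.

Lemma cgr_opp d u v : cgr d u v -> cgr d (- u) (- v).
Proof. by rewrite /cgr (_ : - u - - v = - (u - v)) ?rpredN //; lia. Qed.

Lemma cgr_mull d c u v : cgr d u v -> cgr d (c * u) (c * v).
Proof. by rewrite /cgr -mulrBr => h; apply: dvdz_mull. Qed.

Lemma cgr_dvd d d' u v : (d' %| d)%Z -> cgr d u v -> cgr d' u v.
Proof. by move=> h1 h2; apply: dvdz_trans h1 h2. Qed.

Lemma cgr_dvdE d u v : cgr d u v -> (d %| u)%Z = (d %| v)%Z.
Proof.
rewrite /cgr => h; apply/idP/idP => h'.
  by rewrite (_ : v = u - (u - v)); [apply: rpredB | lia].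
by rewrite (_ : u = (u - v) + v); [apply: rpredD | lia].
Qed.

Arguments cgr_sym {d u v}.
Arguments cgr_trans {d u v w}.
Arguments cgr_add {d u v u' v'}.
Arguments cgr_opp {d u v}.
Arguments cgr_dvd {d d' u v}.
Arguments cgr_dvdE {d u v}.

Section Zm.
Variable n : nat.
Hypothesis hn : (0 < n)%N.
Local Notation N := n.-1.+1.
Lemma NE : N = n. Proof. by rewrite prednK. Qed.

Definition rep (b : Zmod n) : int := (nat_of_ord b)%:Z.

Lemma rep_add (x y : Zmod n) : cgr N%:Z (rep (x + y)) (rep x + rep y).
Proof.
rewrite /cgr /rep /=; have := divn_eq (x + y) N; set q := ((x + y) %/ N)%N.
move=> h; apply/dvdzP; exists (- q%:Z).
have -> : (((x + y) %% N)%:Z = (x%:Z + y%:Z) - q%:Z * N%:Z)%R by lia.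
lia.
Qed.

Lemma rep0 : rep 0 = 0. Proof. by []. Qed.

Lemma rep_opp (x : Zmod n) : cgr N%:Z (rep (- x)) (- rep x).
Proof.
have h := rep_add (- x) x; rewrite addNr rep0 in h.
have h2 := cgr_add (cgr_sym h) (cgr_refl N%:Z (- rep x)).
rewrite add0r addrK in h2; exact: h2.
Qed.

Lemma rep_sub (x y : Zmod n) : cgr N%:Z (rep (x - y)) (rep x - rep y).
Proof.
apply: cgr_trans (rep_add _ _) _; apply: cgr_add (cgr_refl _ _) _.
exact: rep_opp.
Qed.

Lemma rep_mulrn (x : Zmod n) k : cgr N%:Z (rep (x *+ k)) (k%:Z * rep x).
Proof.
elim: k => [|k IH]; first by rewrite mulr0n mul0r; apply: cgr_refl.
rewrite mulrS; apply: cgr_trans (rep_add _ _) _.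
rewrite (_ : k.+1%:Z * rep x = rep x + k%:Z * rep x); last by lia.
exact: cgr_add (cgr_refl _ _) IH.
Qed.

Lemma rep_mulrz (x : Zmod n) q : cgr N%:Z (rep (x *~ q)) (q * rep x).
Proof.
case: q => k; first exact: rep_mulrn.
rewrite NegzE mulrNz; apply: cgr_trans (rep_opp _) _.
rewrite mulNr; apply: cgr_opp.
have -> : (x *~ k.+1%:Z) = x *+ k.+1 by [].
exact: rep_mulrn.
Qed.

Lemma rep_inZp a : rep (inZp a : Zmod n) = (a %% N)%N%:Z.
Proof. by []. Qed.

Lemma rep_ge0 b : (0 <= rep b)%R. Proof. by rewrite /rep. Qed.
Lemma rep_lt b : (rep b < N%:Z)%R. Proof. by rewrite /rep ltz_nat ltn_ord. Qed.

Local Notation G := (ZxZn n).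

Lemma pair_mulrn (x : G) k : x *+ k = (x.1 *+ k, x.2 *+ k).
Proof.
elim: k => [|k IH]; first by rewrite !mulr0n; case: x.
by rewrite !mulrS IH.
Qed.

Lemma pair_mulrz (x : G) q : x *~ q = (x.1 * q, x.2 *~ q).
Proof.
case: q => k.
  have -> : x *~ k = x *+ k by [].
  by rewrite pair_mulrn; congr (_, _); rewrite pmulrn ?mulrzz.
rewrite !NegzE !mulrNz (_ : x *~ k.+1%:Z = x *+ k.+1) //.
rewrite pair_mulrn; congr (_, _) => /=.
by rewrite pmulrn mulrzz mulrN.
Qed.

Section Subgroup.
Variable H : G -> bool.
Hypothesis HS : is_subgroup G H.

Lemma H0 : H 0. Proof. by case: HS. Qed.
Lemma HB x y : H x -> H y -> H (x - y). Proof. by case: HS => _; apply. Qed.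
Lemma HN x : H x -> H (- x).
Proof. by move=> hx; rewrite -sub0r; apply: HB => //; apply: H0. Qed.
Lemma HD x y : H x -> H y -> H (x + y).
Proof. by move=> hx hy; rewrite -[y]opprK; apply: HB => //; apply: HN. Qed.
Lemma HMn x k : H x -> H (x *+ k).
Proof.
move=> hx; elim: k => [|k IH]; first by rewrite mulr0n H0.
by rewrite mulrS HD.
Qed.
Lemma HMz x q : H x -> H (x *~ q).
Proof.
move=> hx; case: q => k; first exact: HMn.
by rewrite NegzE mulrNz; apply: HN; apply: HMn.
Qed.
End Subgroup.
End Zm.
Section Struct.
Variable n : nat.
Hypothesis hn : (0 < n)%N.
Local Notation N := n.-1.+1.
Local Notation G := (ZxZn n).

Definition gpar (k m a : nat) : {ptws G -> bool} := fun x =>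
  (k%:Z %| x.1)%Z && (m%:Z %| rep x.2 - (x.1 %/ k%:Z)%Z * a%:Z)%Z.

Lemma mN m : (m %| n)%N -> (m%:Z %| N%:Z)%Z.
Proof. by rewrite dvdzE /= prednK. Qed.

Lemma cgr_m m u v : (m %| n)%N -> cgr N%:Z u v -> cgr m%:Z u v.
Proof. by move=> /mN h; apply: cgr_dvd. Qed.

Lemma gpar_sub k m a : (m %| n)%N -> is_subgroup G (gpar k m a).
Proof.
move=> mn; split.
  by rewrite /gpar /= dvdz0 div0z mul0r subr0 rep0 dvdz0.
move=> [z1 b1] [z2 b2]; rewrite /gpar /= => /andP[d1 c1] /andP[d2 c2].

rewrite rpredB //=.
move: d1 d2 c1 c2 => /dvdzP[q1 ->] /dvdzP[q2 ->] c1 c2.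
have e : forall q : int, ((q * k%:Z) %/ k%:Z)%Z = if k == 0%N then 0 else q.
  move=> q; case: eqP => [->|/eqP k0]; first by rewrite mulr0 divz0.
  by rewrite mulzK.
rewrite -mulrBl !e in c1 c2 *.
have hc := cgr_m mn (rep_sub hn b1 b2).
rewrite (cgr_dvdE (_ : cgr _ _ ((rep b1 - (if k == 0%N then 0 else q1) * a%:Z)
   - (rep b2 - (if k == 0%N then 0 else q2) * a%:Z)))); first exact: rpredB.
case: (k == 0%N).
  by rewrite !mul0r !subr0.
rewrite [X in cgr _ _ X](_ : _ = (rep b1 - rep b2) - (q1 - q2) * a%:Z); last by lia.
exact: cgr_add hc (cgr_refl _ _).
Qed.

Lemma cyc_genE m b : (m %| n)%N -> cyc_gen n m b = (m %| b)%N.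
Proof.
move=> mn; have mN' : (m %| N)%N by rewrite prednK.
rewrite /cyc_gen; apply/asboolP/idP.
  case=> k ->; rewrite Zp_mulrn /=.
  rewrite {1}/dvdn modn_dvdm //; apply: dvdn_mulr.
  by rewrite /dvdn modn_dvdm // modnn.
case/dvdnP => c hb; exists c; apply: val_inj.
rewrite Zp_mulrn /= modnMml [(m * c)%N]mulnC -hb modn_small //.
Qed.

Lemma gpar0E m : (m %| n)%N -> gpar 0 m 0 = zero_times_cyc n m.
Proof.
move=> mn; apply/funext => -[z b]; rewrite /gpar /zero_times_cyc /=.
by rewrite dvd0z mulr0 subr0 cyc_genE.
Qed.

End Struct.

Section Struct2.
Variable n : nat.
Hypothesis hn : (0 < n)%N.
Local Notation N := n.-1.+1.
Local Notation G := (ZxZn n).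

Lemma inZp_add a b : (inZp a + inZp b : Zmod n) = inZp (a + b).
Proof. by apply: val_inj => /=; rewrite modnDm. Qed.

Lemma inZp_mulrn a q : (inZp a : Zmod n) *+ q = inZp (a * q).
Proof. by apply: val_inj; rewrite Zp_mulrn /= modnMml. Qed.

Lemma inZpn : (inZp n : Zmod n) = 0.
Proof. by apply: val_inj => /=; rewrite prednK // modnn. Qed.

Lemma pairB (a c : int) (b d : Zmod n) : ((a, b) - (c, d) : G) = (a - c, b - d).
Proof. by []. Qed.
Lemma pairD (a c : int) (b d : Zmod n) : ((a, b) + (c, d) : G) = (a + c, b + d).
Proof. by []. Qed.

Lemma pairN (a : int) (b : Zmod n) : (- (a, b) : G) = (- a, - b).
Proof. by []. Qed.

Variable H : G -> bool.
Hypothesis HS : is_subgroup G H.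

Lemma structure : exists k m a, [/\ (0 < m)%N, (m %| n)%N, (a < m)%N,
  (k == 0%N) ==> (a == 0%N) & H = gpar (n:=n) k m a].
Proof.
pose P t := (0 < t)%N && H (0%:Z, inZp t).
have exP : exists t, P t.
  by exists n; rewrite /P hn inZpn; apply: (H0 HS).
case: (ex_minnP exP) => m /andP[m0 Hm] minm.
have HZt t : H (0%:Z, inZp t) -> (m %| t)%N.
  move=> ht; have e := divn_eq t m.
  have e2 : (inZp t : Zmod n) = inZp (t %% m) + inZp m *+ (t %/ m).
    by rewrite inZp_mulrn inZp_add mulnC addnC -e.
  have : H ((0%:Z, inZp t) - (0%:Z, inZp m) *+ (t %/ m)) by apply: HB => //; apply: HMn.
  rewrite pair_mulrn /= mul0rn e2.
  have -> : ((0%:Z, inZp (t %% m) + inZp m *+ (t %/ m)) - (0%:Z, inZp m *+ (t %/ m)) : G)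
     = (0%:Z, inZp (t %% m)) by rewrite pairB subrr addrK.
  move=> hr; case: (posnP (t %% m)) => [r0|rpos]; first by rewrite /dvdn r0.
  have := minm (t %% m)%N; rewrite /P rpos hr => /(_ isT).
  by rewrite leqNgt ltn_pmod.
have mn : (m %| n)%N by apply: HZt; rewrite inZpn; apply: (H0 HS).
have HZ0 b : H (0%:Z, b) = (m %| b)%N.
  apply/idP/idP => [hb|/dvdnP[c hc]]; first by apply: HZt; rewrite valZpK.
  have -> : b = inZp m *+ c.
    by rewrite -[b]valZpK hc inZp_mulrn mulnC.
  have -> : ((0%:Z, inZp m *+ c) : G) = (0%:Z, inZp m) *+ c.
    by rewrite pair_mulrn /= mul0rn.
  exact: HMn.
have [[z [b [z0 hzb]]] | none] := pselect (exists z b, z != 0 /\ H (z, b)); last first.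
  exists 0%N, m, 0%N; split => //.
  apply/funext => -[z b]; rewrite /gpar /= dvd0z mulr0 subr0.
  case: (eqVneq z 0) => [->|zn0] /=; first by rewrite HZ0.
  by apply/negbTE/negP => h; apply: none; exists z, b.
have exK : exists t, (0 < t)%N && [exists b, H (t%:Z, b)].
  case: z z0 hzb => t z0 hzb.
    exists t; rewrite lt0n; apply/andP; split; first by move: z0; apply: contra => /eqP ->.
    by apply/existsP; exists b.
  exists t.+1; apply/andP; split => //; apply/existsP; exists (- b).
  have := HN HS hzb; rewrite NegzE.
  by have -> : (- ((- t.+1%:Z, b) : G)) = (t.+1%:Z, - b) by rewrite pairN opprK.
case: (ex_minnP exK) => k /andP[k0 /existsP[b0 Hb0]] mink.
exists k, m, (b0 %% m)%N; split => //; first by rewrite ltn_pmod.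
  by rewrite eqn0Ngt k0.
clear z b z0 hzb; apply/funext => -[z b]; rewrite /gpar /=.
set q := (z %/ k)%Z; set a := (b0 %% m)%N.
have ez := divz_eq z k.
have kz : (k%:Z != 0) by lia.
have r0 := modz_ge0 z kz.
have rk : ((z %% k)%Z < k%:Z)%R by apply: ltz_pmod; lia.
have key : ((z, b) - (k%:Z, b0) *~ q : G) = ((z %% k)%Z, b - b0 *~ q).
  by rewrite pair_mulrz pairB /=; congr (_, _); lia.
have cg : cgr m (rep (b - b0 *~ q)) (rep b - q * a%:Z).
  have h1 := cgr_m hn mn (rep_sub hn b (b0 *~ q)).
  have h2 := cgr_m hn mn (rep_mulrz hn b0 q).
  have h3 : cgr m (rep b0) a%:Z.
    rewrite /cgr /rep; apply/dvdzP; exists (b0 %/ m)%N%:Z.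
    have := divn_eq b0 m; rewrite /a; lia.
  apply: cgr_trans h1 _; apply: cgr_add (cgr_refl _ _) _; apply: cgr_opp.
  by apply: cgr_trans h2 _; apply: cgr_mull h3.
apply/idP/idP.
  move=> hzb'; have := HB HS hzb' (HMz HS q Hb0); rewrite key => hr.
  have rz : (z %% k)%Z = 0.
    move: r0 rk hr; case E: (z %% k)%Z => [r|r] //= _ rk hr.
    case: (posnP r) => [->//|rpos]; have := mink r; rewrite rpos /=.
    have -> : [exists b, H (r%:Z, b)] by apply/existsP; eexists; exact: hr.
    by move=> /(_ isT); lia.
  apply/andP; split; first by apply/dvdz_mod0P.
  by rewrite -(cgr_dvdE cg); move: hr; rewrite rz HZ0.
move=> /andP[kz' mz]; have rz : (z %% k)%Z = 0 by apply/dvdz_mod0P.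
have hr : H ((z %% k)%Z, b - b0 *~ q).
  by rewrite rz HZ0; have := mz; rewrite -(cgr_dvdE cg).
have -> : ((z, b) : G) = ((z %% k)%Z, b - b0 *~ q) + (k%:Z, b0) *~ q.
  by rewrite -key subrK.
apply: (HD HS hr); exact: HMz.
Qed.
End Struct2.

Section Comb.
Variable n : nat.
Hypothesis hn : (0 < n)%N.
Local Notation N := n.-1.+1.
Local Notation G := (ZxZn n).

Definition dv (i : 'I_(ndiv n)) : nat := nth 0%N (divisors n) i.

Lemma dv_mem i : dv i \in divisors n.
Proof. by apply: mem_nth; exact: (ltn_ord i). Qed.
Lemma dv_dvd i : (dv i %| n)%N.
Proof. by rewrite (dvdn_divisors _ hn) dv_mem. Qed.
Lemma dv_pos i : (0 < dv i)%N.
Proof.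
have := dv_dvd i; rewrite lt0n; apply: contraL => /eqP ->.
by rewrite dvd0n -lt0n.
Qed.
Lemma dv_le i : (dv i <= n)%N.
Proof. exact: dvdn_leq (dv_dvd i). Qed.
Lemma dv_inj : injective dv.
Proof.
move=> i j /eqP; rewrite /dv nth_uniq ?divisors_uniq //.
by move/eqP/val_inj.
Qed.
Lemma dv_surj m : (m %| n)%N -> exists i, dv i = m.
Proof.
move=> mn; have mi : m \in divisors n by rewrite -dvdn_divisors.
have hi : (index m (divisors n) < ndiv n)%N by rewrite index_mem.
by exists (Ordinal hi); rewrite /dv /= nth_index.
Qed.

Definition gmap (y : Nbar * Kset (ndiv n)) : {ptws G -> bool} :=
  match y with
  | (Some j, i) => gpar (n:=n) (j %/ dv i).+1 (dv i) (j %% dv i)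
  | (None, i) => gpar (n:=n) 0 (dv i) 0
  end.

Lemma rep_inZp_small c : (c < n)%N -> rep (inZp c : Zmod n) = c%:Z.
Proof. by move=> h; rewrite rep_inZp modn_small // prednK. Qed.

Lemma gparE k m a t b :
  gpar (n:=n) k m a (t%:Z, b) = (k %| t)%N && (m%:Z %| rep b - (t %/ k)%N%:Z * a%:Z)%Z.
Proof. by rewrite /gpar /= divz_nat. Qed.

Lemma gpar0 k m a b : gpar (n:=n) k m a (0%:Z, b) = (m %| b)%N.
Proof. by rewrite gparE dvdn0 div0n mul0r subr0. Qed.

Definition agree (K : nat) (H H' : {ptws G -> bool}) :=
  forall (z : nat) (b : Zmod n), (z <= K)%N -> H (z%:Z, b) = H' (z%:Z, b).

Lemma dvd_eq_small m m' : (0 < m)%N -> (0 < m')%N -> (m %| n)%N -> (m' %| n)%N ->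
  (forall x, (x < n)%N -> (m %| x)%N = (m' %| x)%N) -> m = m'.
Proof.
move=> m0 m'0 mn m'n h.
have le1 := dvdn_leq hn mn; have le2 := dvdn_leq hn m'n.
case: (ltnP m n) => [mlt|mge]; case: (ltnP m' n) => [m'lt|m'ge].
- apply/eqP; rewrite eqn_dvd; apply/andP; split.
    by rewrite (h _ m'lt) dvdnn.
  by rewrite -(h _ mlt) dvdnn.
- have := h _ mlt; rewrite dvdnn => /esym hm.
  have := dvdn_leq m0 hm; lia.
- have := h _ m'lt; rewrite dvdnn => hm.
  have := dvdn_leq m'0 hm; lia.
- lia.
Qed.

Lemma agree_snd K y y' : agree K (gmap y) (gmap y') -> y.2 = y'.2.
Proof.
move=> ag; apply: dv_inj; apply: dvd_eq_small; rewrite ?dv_pos ?dv_dvd //.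
move=> x xn; have := ag 0%N (inZp x) (leq0n _).
have e : forall y0 : Nbar * Kset (ndiv n), gmap y0 (0%:Z, inZp x) = (dv y0.2 %| x)%N.
  by case=> -[j|] i; rewrite /gmap gpar0 /= modn_small // prednK.
by rewrite !e.
Qed.

End Comb.

Section Comb2.
Variable n : nat.
Hypothesis hn : (0 < n)%N.
Local Notation N := n.-1.+1.
Local Notation G := (ZxZn n).

Lemma gpar_self k m a : (0 < k)%N -> (a < m)%N -> (m <= n)%N ->
  gpar (n:=n) k m a (k%:Z, inZp a) = true.
Proof.
move=> k0 am mn; rewrite gparE dvdnn divnn k0 rep_inZp_small //; last by lia.
by rewrite mul1r subrr dvdz0.
Qed.

Lemma gpar0_pos m a t b : (0 < t)%N -> gpar (n:=n) 0 m a (t%:Z, b) = false.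
Proof. by move=> t0; rewrite gparE dvd0n; case: t t0. Qed.

Lemma small_eq (a a' m : nat) (c : int) : (a < m)%N -> (a' < m)%N -> a%:Z - a'%:Z = c * m%:Z -> a = a'.
Proof.
move=> h1 h2 h.
have [c0|[c0|c0]] : (c = 0) \/ (1 <= c) \/ (c <= -1) by lia.
- move: h; rewrite c0 mul0r; lia.
- have : (1 * m%:Z <= c * m%:Z) by rewrite ler_pM2r //; lia.
  lia.
- have : (c * m%:Z <= -1 * m%:Z) by rewrite ler_pM2r //; lia.
  lia.
Qed.

Lemma agree_some j i y' K : ((j %/ dv i).+1 <= K)%N ->
  agree K (gmap (n:=n) (Some j, i)) (gmap (n:=n) y') -> y' = (Some j, i).
Proof.
move=> kK ag; have e2 := agree_snd hn ag.
move: y' e2 ag => [[j'|] i'] /= <- ag; set m := dv i in ag kK *.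
have m0 : (0 < m)%N by apply: dv_pos.
have mn : (m <= n)%N by apply: dv_le.
have am : (j %% m < m)%N by rewrite ltn_pmod.
have a'm : (j' %% m < m)%N by rewrite ltn_pmod.
  have h1 := ag _ (inZp (j %% m)) kK.
  rewrite /gmap -/m gpar_self // in h1.
  have k'k : ((j' %/ m).+1 %| (j %/ m).+1)%N by move: h1; rewrite gparE => /esym/andP[].
  have k'K : ((j' %/ m).+1 <= K)%N by apply: leq_trans kK; apply: dvdn_leq.
  have h2 := ag _ (inZp (j' %% m)) k'K.
  rewrite /gmap -/m [RHS]gpar_self // gparE in h2.
  have kk' : ((j %/ m).+1 %| (j' %/ m).+1)%N by case/andP: h2.
  have ek : (j %/ m = j' %/ m)%N.
    by apply/eqP; rewrite -eqSS eqn_dvd kk' k'k.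
  move: h1; rewrite gparE -ek divnn /= mul1r (rep_inZp_small hn); last by lia.
  move=> /esym/andP[_ /dvdzP[c hc]].
  have ea := small_eq am a'm hc.
  by congr (Some _, _); rewrite (divn_eq j m) (divn_eq j' m) ek ea.
have h1 := ag _ (inZp (j %% m)) kK.
by rewrite /gmap -/m gpar_self ?ltn_pmod ?dv_pos ?dv_le // gpar0_pos in h1.
Qed.

Lemma agree_none i y' K : agree K (gmap (n:=n) (None, i)) (gmap (n:=n) y') ->
  y'.2 = i /\ (forall j', y'.1 = Some j' -> (K <= j')%N).
Proof.
move=> ag; have e2 := agree_snd hn ag.
split; first by [].
move: y' e2 ag => [[j'|] i'] /= <- ag // _ [<-]; set m := dv i in ag *.
have m0 : (0 < m)%N by apply: dv_pos.
have mn : (m <= n)%N by apply: dv_le.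
have a'm : (j' %% m < m)%N by rewrite ltn_pmod.
case: (leqP (j' %/ m).+1 K) => [k'K|].
  have h := ag _ (inZp (j' %% m)) k'K.
  by rewrite /gmap -/m gpar_self // gpar0_pos in h.
move=> lt; apply: leq_trans (leq_div j' m); lia.
Qed.

End Comb2.

Section Top.
Variable n : nat.
Hypothesis hn : (0 < n)%N.
Local Notation G := (ZxZn n).
Local Notation FT := {ptws G -> bool}.

Lemma eval_near (H : FT) (x : G) : \forall H' \near H, H' x = H x.
Proof.
have := @proj_continuous G (fun _ => bool) x H.
move=> /(_ [set H x]) h; apply: h.
exact: discrete_set1.
Qed.

Lemma ptws_cvg_at (T : topologicalType) (f : T -> FT) (t : T) :
  (forall x : G, \forall s \near t, f s x = f t x) -> f @ t --> f t.
Proof.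
move=> h.
apply: (proj2 (@pointwise_cvgP (discrete_topology G) bool (f @ t) (f t) _)).

move=> x; apply/discrete_cvg.
exact: (h x).
Qed.

Lemma agree_near (H : FT) K : \forall H' \near H, agree K H H'.
Proof.
have := @filter_forall FT ('I_K.+1 * Zmod n)%type (fun p H' => H' (p.1%:Z, p.2) = H (p.1%:Z, p.2)) (nbhs H) (nbhs_filter H) (fun p => eval_near H (p.1%:Z, p.2)).
apply: filterS => H' h z b zK.
by have := h (Ordinal (zK : (z < K.+1)%N), b) => /= ->.
Qed.

End Top.

Lemma opc_some (j : nat) : nbhs (Some j : Nbar) [set Some j].
Proof.
change (nbhs j (Some @^-1` [set (Some j : option nat)])).
have -> : Some @^-1` [set (Some j : option nat)] = [set j].
  by apply/seteqP; split => x /=; [case|move=> ->].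
exact: discrete_set1.
Qed.

Lemma opc_none K : \forall y \near (None : Nbar),
  y = None \/ exists2 j, (K <= j)%N & y = Some j.
Proof.
exists `I_K; first split.
- exact: finite_compact (finite_II K).
- exact: discrete_closed.
move=> y [[x nx <-]|->]; last by left.
right; exists x => //; rewrite leqNgt; apply/negP => h; exact: nx.
Qed.

Lemma opc_none_inv (U : set Nbar) : nbhs (None : Nbar) U ->
  exists K, forall j, (K <= j)%N -> U (Some j).
Proof.
case => C [cC clC] sub.
have := cC; rewrite compact_cover => cC'.
have cv : C `<=` cover setT (fun i : nat => [set j : nat | (j < i)%N]).
  by move=> j _; rewrite /cover; exists j.+1 => //=; rewrite /= inE /=.
have [D' _ cov] := cC' nat setT _ (fun i _ => discrete_open _) cv.
exists (\max_(i <- finmap.enum_fset D') i)%N => j jK.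
apply: sub; left; exists j => //= Cj.
have [i iD ji] := cov j Cj.
have := @leq_bigmax_seq nat (finmap.enum_fset D') xpredT id i iD isT.
move: ji jK; rewrite /= => ji jK il.
have : (j < j)%N by apply: leq_trans ji (leq_trans il jK).
by rewrite ltnn.
Qed.


Section Main.
Variable n : nat.
Hypothesis hn : (0 < n)%N.
Local Notation G := (ZxZn n).
Local Notation FT := {ptws G -> bool}.
Local Notation T := (Nbar * Kset (ndiv n))%type.

Lemma prod_nbhs_split (y : T) W : nbhs y W -> exists A B,
  [/\ nbhs y.1 A, nbhs y.2 B & forall u v, A u -> B v -> W (u, v)].
Proof.
case => -[A B] /= [nA nB] sub; exists A, B; split => // u v Au Bv.
by apply: sub; split.
Qed.

Lemma prod_nbhs_mk (y : T) A B W : nbhs y.1 A -> nbhs y.2 B ->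
  (forall u v, A u -> B v -> W (u, v)) -> nbhs y W.
Proof. by move=> nA nB sub; exists (A, B) => //= -[u v] [/= Au Bv]; apply: sub. Qed.

Lemma gmap_cont : continuous (gmap (n:=n)).
Proof.
move=> [[j|] i].
  move=> W hW; apply: (prod_nbhs_mk (y := (Some j, i)) (W := gmap (n:=n) @^-1` W) (@opc_some j) (discrete_set1 (i : Kset _))).
  by move=> u v -> ->; apply: nbhs_singleton hW.
apply: ptws_cvg_at => -[z b]; set m := dv i.
apply: (prod_nbhs_mk (y := (None, i)) (W := fun s => gmap s (z, b) = gmap (None, i) (z, b)) (@opc_none (`|z| * m)%N) (discrete_set1 (i : Kset _))).
move=> u v hu ->; case: hu => [->|[j jK ->]] //=.
rewrite -/m /gpar /= dvd0z mulr0 subr0.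
case: (eqVneq z 0) => [->|zn0].
  by rewrite dvdz0 div0z mul0r subr0.
rewrite andFb; apply/negbTE; apply/negP => /andP[h _]; move: h; rewrite dvdzE /= => h.
have m0 : (0 < m)%N by apply: dv_pos.
have zpos : (0 < `|z|)%N by rewrite absz_gt0.
have := dvdn_leq zpos h.
have : (`|z| <= j %/ m)%N.
  by have := leq_div2r m jK; rewrite mulnK.
lia.
Qed.

Definition finv (y0 : T) (H : FT) : T := xget y0 (fun y => gmap y = H).

Lemma gsurj (H : FT) : Chabauty G H -> exists y : T, gmap y = H.
Proof.
move=> HS; have [k [m [a [m0 mn am ka ->]]]] := structure hn HS.
have [i ei] := dv_surj hn mn.
case: k ka => [/eqP->|k _]; first by exists (None, i); rewrite /= ei.
exists (Some (k * m + a)%N, i); rewrite /= ei.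
have e1 : ((k * m + a) %/ m = k)%N by rewrite divnMDl // divn_small // addn0.
have e2 : ((k * m + a) %% m = a)%N by rewrite modnMDl modn_small.
by rewrite e1 e2.
Qed.

Lemma agree_refl K (H H' : FT) : H = H' -> agree K H H'.
Proof. by move=> -> z b _. Qed.

Lemma ginj : injective (gmap (n:=n)).
Proof.
move=> [[j|] i] y' e.
  by apply/esym/(agree_some hn (K := (j %/ dv i).+1)) => //; apply: agree_refl.
case: y' e => [[j'|] i'] e.
  have [_ h] := agree_none hn (K := j'.+1) (agree_refl e).
  by have := h j' erefl; rewrite ltnn.
by have [/= -> _] := agree_none hn (K := 0) (agree_refl e).
Qed.

Lemma finvK y0 y : finv y0 (gmap y) = y.
Proof. by apply: ginj; exact: (xgetPex y0 (ex_intro (fun y' => gmap (n:=n) y' = gmap y) y erefl)). Qed.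

Lemma gfinv y0 (H : FT) : Chabauty G H -> gmap (finv y0 H) = H.
Proof. by move=> AH; apply: (xgetPex y0 (gsurj AH)). Qed.

Lemma gmapA y : Chabauty G (gmap y).
Proof. by case: y => -[j|] i; apply: (gpar_sub hn); exact: (dv_dvd hn). Qed.

Lemma finv_cont y0 : {within Chabauty G, continuous (finv y0)}.
Proof.
apply/subspace_continuousP => H AH.
have [y <-] := gsurj AH; rewrite /from_subspace finvK => U hU.
suff h : \forall H' \near gmap (n:=n) y, Chabauty G H' -> U (finv y0 H') by [].
case: y hU => -[j|] i hU.
  apply: filterS (agree_near (gmap (n:=n) (Some j, i)) (j %/ dv i).+1) => H' ag AH'.
  have [y' e] := gsurj AH'; rewrite -e in ag *.
  by rewrite finvK (agree_some hn (leqnn _) ag); apply: nbhs_singleton hU.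
have [A1 [B1 [nA nB sub]]] := prod_nbhs_split hU.
have [K hK] := opc_none_inv nA.
apply: filterS (agree_near (gmap (n:=n) (None, i)) K) => H' ag AH'.
have [y' e] := gsurj AH'; rewrite -e in ag *; rewrite finvK.
have [e2 h] := agree_none hn ag.
case: y' e2 h ag e => -[j'|] i' /= e2 h _ _; rewrite e2; apply: sub.
- exact: hK (h j' erefl).
- exact: nbhs_singleton nB.
- exact: nbhs_singleton nA.
- exact: nbhs_singleton nB.
Qed.

End Main.

Unset Implicit Arguments. Set Strict Implicit.

Theorem corollary1 (n : nat) (hn : (1 <= n)%N) :
  @homeomorphic_to _ (Nbar * Kset (ndiv n))%type (Chabauty (ZxZn n)) /\
  Chabauty (ZxZn n) `&` limit_point (Chabauty (ZxZn n)) =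
    [set H | exists m : nat, [/\ (0 < m)%N, (m %| n)%N & H = zero_times_cyc n m]].
Proof.
have [i0 _] := dv_surj hn (dvd1n n).
split.
  exists (finv (n:=n) (None, i0)), (gmap (n:=n)); split.
  - exact: finv_cont.
  - exact: gmap_cont.
  - by move=> x Ax; apply: gfinv.
  - by move=> y; split; [apply: gmapA | apply: finvK].
apply/seteqP; split.
- move=> H [AH lp]; have [[[j|] i] e] := gsurj hn AH; subst H.
    have := lp _ (agree_near (gmap (n:=n) (Some j, i)) (j %/ dv i).+1).
    case=> H' [ne AH' ag]; have [y' e'] := gsurj hn AH'; subst H'.
    by rewrite (agree_some hn (leqnn _) ag) eqxx in ne.
  exists (dv i); split; first exact: (dv_pos hn).
    exact: (dv_dvd hn).
  by rewrite /= gpar0E //; exact: (dv_dvd hn).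
- move=> H [m [m0 mn ->]]; have [i ei] := dv_surj hn mn.
  have eH : zero_times_cyc n m = gmap (n:=n) (None, i) by rewrite /= ei gpar0E.
  rewrite eH; split; first exact: gmapA.
  move=> U hU.
  have := gmap_cont hn hU => /prod_nbhs_split [A1 [B1 [nA nB sub]]].
  have [K hK] := opc_none_inv nA.
  exists (gmap (n:=n) (Some K, i)); split.
  - by apply/eqP => h; have := ginj hn h.
  - exact: gmapA.
  - exact: sub (hK K (leqnn K)) (nbhs_singleton nB).
Qed.
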